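(* Let $G=(V,\pi)$ be a two-player game with two questions per player ($\{A,A'\}$ for Alice, $\{B,B'\}$ for Bob) and finite answer sets. If $\pi(X,Y)=0$ for some question pair $(X,Y)$, then $\omega^*(G)=\omega(G)$.
   Context: $\omega(G)$ is the classical value: the supremum of $\sum_{x,y}\pi(x,y)V(\alpha(x),\beta(y)|x,y)$ over functions $\alpha,\beta$ from questions to answers. $\omega^*(G)$ is the entangled value: the supremum, over finite-dimensional states $|\psi\rangle\in\mathbb{C}^{d_A}\otimes\mathbb{C}^{d_B}$ and POVMs $\{A^x_a\}_a,\{B^y_b\}_b$, of $\sum_{x,y}\pi(x,y)\sum_{a,b}V(a,b|x,y)\langle\psi|A^x_a\otimes B^y_b|\psi\rangle$. *)

(* Defs.v *)
From HB Require Import structures.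
From mathcomp Require Import all_boot all_order all_algebra.
Set Implicit Arguments. Unset Strict Implicit. Unset Printing Implicit Defensive.
Import Order.TTheory GRing.Theory Num.Theory.
Local Open Scope ring_scope.

(* Scalars: an arbitrary numClosedFieldType R (e.g. the complex numbers).
   Questions: bool for each player (false = A resp. B, true = A' resp. B').
   A game is given by a question distribution pi : bool -> bool -> R and a
   predicate V : SA -> SB -> bool -> bool -> bool  (V a b x y = "win"). *)

Definition is_distribution (R : numClosedFieldType) (pi : bool -> bool -> R) :=
  (forall x y, 0 <= pi x y) /\ \sum_(x : bool) \sum_(y : bool) pi x y = 1.

Definition cval (R : numClosedFieldType) (SA SB : finType)
  (pi : bool -> bool -> R) (V : SA -> SB -> bool -> bool -> bool)
  (alpha : {ffun bool -> SA}) (beta : {ffun bool -> SB}) : R :=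
  \sum_(x : bool) \sum_(y : bool) pi x y * (V (alpha x) (beta y) x y)%:R.

(* omega(G): the maximum (= supremum, finitely many strategies) of the
   classical values; the answer sets are assumed nonempty in the theorem. *)
Definition omega (R : numClosedFieldType) (SA SB : finType)
  (pi : bool -> bool -> R) (V : SA -> SB -> bool -> bool -> bool) : R :=
  \big[Num.max/0]_(alpha : {ffun bool -> SA})
    \big[Num.max/0]_(beta : {ffun bool -> SB}) cval pi V alpha beta.

Definition psd (R : numClosedFieldType) (n : nat) (M : 'M[R]_n) :=
  forall v : 'cV[R]_n, 0 <= \sum_(i < n) \sum_(j < n) (v i 0)^* * M i j * v j 0.

Definition is_povm (R : numClosedFieldType) (S : finType) (n : nat)
  (P : bool -> S -> 'M[R]_n) :=
  (forall x a, psd (P x a)) /\ (forall x, \sum_(a : S) P x a = 1%:M).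

(* A unit vector |psi> in C^dA (x) C^dB, represented by its coefficient
   matrix: |psi> = sum_{i,k} psi i k |i>|k>. *)
Definition is_state (R : numClosedFieldType) (dA dB : nat) (psi : 'M[R]_(dA, dB)) :=
  \sum_(i < dA) \sum_(k < dB) `|psi i k| ^+ 2 = 1.

(* <psi| P (x) Q |psi>, written out in coordinates. *)
Definition qcorr (R : numClosedFieldType) (dA dB : nat) (psi : 'M[R]_(dA, dB))
  (P : 'M[R]_dA) (Q : 'M[R]_dB) : R :=
  \sum_(i < dA) \sum_(j < dA) \sum_(k < dB) \sum_(l < dB)
     (psi i k)^* * P i j * Q k l * psi j l.

Definition qval (R : numClosedFieldType) (SA SB : finType)
  (pi : bool -> bool -> R) (V : SA -> SB -> bool -> bool -> bool)
  (dA dB : nat) (psi : 'M[R]_(dA, dB))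
  (PA : bool -> SA -> 'M[R]_dA) (PB : bool -> SB -> 'M[R]_dB) : R :=
  \sum_(x : bool) \sum_(y : bool) pi x y *
    \sum_(a : SA) \sum_(b : SB) (V a b x y)%:R * qcorr psi (PA x a) (PB y b).

Definition quantum_values (R : numClosedFieldType) (SA SB : finType)
  (pi : bool -> bool -> R) (V : SA -> SB -> bool -> bool -> bool) (v : R) : Prop :=
  exists (dA dB : nat) (psi : 'M[R]_(dA, dB))
         (PA : bool -> SA -> 'M[R]_dA) (PB : bool -> SB -> 'M[R]_dB),
    [/\ is_state psi, is_povm PA, is_povm PB & v = qval pi V psi PA PB].

Definition is_sup (R : numClosedFieldType) (S : R -> Prop) (s : R) : Prop :=
  (forall v, S v -> v <= s) /\ (forall u, (forall v, S v -> v <= u) -> s <= u).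

(* omega*(G) = omega(G), i.e. omega(G) is the supremum of the entangled values. *)
Definition omega_star_eq_omega (R : numClosedFieldType) (SA SB : finType)
  (pi : bool -> bool -> R) (V : SA -> SB -> bool -> bool -> bool) : Prop :=
  is_sup (quantum_values pi V) (omega pi V).

(* Main.v *)
Require Import Defs.
From HB Require Import structures.
From mathcomp Require Import all_boot all_order all_algebra.
From mathcomp Require Import ring.
Import Order.TTheory GRing.Theory Num.Theory.
Set Implicit Arguments. Unset Strict Implicit. Unset Printing Implicit Defensive.
Local Open Scope ring_scope.

Lemma max_props (R : numClosedFieldType) (x y : R) : 0 <= x -> 0 <= y ->
  [/\ x <= Num.max x y, y <= Num.max x y & (Num.max x y = x \/ Num.max x y = y)].
Proof.
move=> hx hy; rewrite /Num.max /Order.max.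
have rx := ger0_real hx; have ry := ger0_real hy.
case: ifP => hxy.
  by split => //; [exact: ltW | right].
split => //; [|by left].
by rewrite real_leNgt // hxy.
Qed.

Lemma bigmax_props (R : numClosedFieldType) (I : eqType) (s : seq I) (F : I -> R) :
  (forall i, 0 <= F i) ->
  let M := \big[Num.max/0]_(i <- s) F i in
  [/\ 0 <= M, (forall i, i \in s -> F i <= M) & (M = 0 \/ exists i, M = F i)].
Proof.
move=> F0; elim: s => [|x s [IH1 IH2 IH3]] /=.
  by rewrite big_nil; split => //; left.
rewrite big_cons; have [h1 h2 h3] := @max_props R _ _ (F0 x) IH1.
split.
- exact: le_trans (F0 x) h1.
- move=> i; rewrite inE => /orP [/eqP -> //|/IH2 hi]; exact: le_trans hi h2.
- case: h3 => ->; first by right; exists x.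
  exact: IH3.
Qed.

Definition Bf (R : numClosedFieldType) (n : nat) (Q : 'M[R]_n) (u w : 'I_n -> R) : R :=
  \sum_i \sum_j (u i)^* * Q i j * w j.

Definition psdf (R : numClosedFieldType) (n : nat) (Q : 'M[R]_n) :=
  forall f : 'I_n -> R, 0 <= Bf Q f f.

Definition dl (R : numClosedFieldType) (n : nat) (m : 'I_n) : 'I_n -> R :=
  fun j => (j == m)%:R.

Lemma psd_psdf (R : numClosedFieldType) (n : nat) (Q : 'M[R]_n) : psd Q -> psdf Q.
Proof.
move=> H f; have := H (\col_i f i); rewrite /Bf.
by under eq_bigr do under eq_bigr do rewrite !mxE.
Qed.

Lemma sum_dl_r (R : numClosedFieldType) (n : nat) (m : 'I_n) (F : 'I_n -> R) :
  \sum_j F j * dl R m j = F m.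
Proof.
rewrite (bigD1 m) //= /dl eqxx mulr1 big1 ?addr0 // => j /negbTE ->; by rewrite mulr0.
Qed.

Lemma sum_dl_l (R : numClosedFieldType) (n : nat) (m : 'I_n) (F : 'I_n -> R) :
  \sum_j (dl R m j)^* * F j = F m.
Proof.
rewrite (bigD1 m) //= /dl eqxx rmorph1 mul1r big1 ?addr0 // => j /negbTE ->.
by rewrite rmorph0 mul0r.
Qed.

Lemma Bf_dl_l (R : numClosedFieldType) (n : nat) (Q : 'M[R]_n) m w :
  Bf Q (dl R m) w = \sum_j Q m j * w j.
Proof.
rewrite /Bf -(sum_dl_l m (fun i => \sum_j Q i j * w j)); apply: eq_bigr => i _.
by rewrite mulr_sumr; apply: eq_bigr => j _; rewrite mulrA.
Qed.

Lemma Bf_dl_r (R : numClosedFieldType) (n : nat) (Q : 'M[R]_n) u m :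
  Bf Q u (dl R m) = \sum_i (u i)^* * Q i m.
Proof. by rewrite /Bf; apply: eq_bigr => i _; rewrite sum_dl_r. Qed.

Lemma Bf_dl (R : numClosedFieldType) (n : nat) (Q : 'M[R]_n) k l :
  Bf Q (dl R k) (dl R l) = Q k l.
Proof. by rewrite Bf_dl_l sum_dl_r. Qed.

Lemma Bf_add (R : numClosedFieldType) (n : nat) (Q : 'M[R]_n) u d (t : R) :
  Bf Q (fun i => u i + t * d i) (fun i => u i + t * d i) =
  Bf Q u u + t * Bf Q u d + t^* * Bf Q d u + t * t^* * Bf Q d d.
Proof.
rewrite /Bf !mulr_sumr -!big_split; apply: eq_bigr => i _.
rewrite !mulr_sumr -!big_split; apply: eq_bigr => j _ /=.
rewrite rmorphD rmorphM /=; ring.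
Qed.

Lemma psdf_herm (R : numClosedFieldType) (n : nat) (Q : 'M[R]_n) :
  psdf Q -> forall k l, Q l k = (Q k l)^*.
Proof.
move=> H k l.
have cr : forall f, (Bf Q f f)^* = Bf Q f f by move=> f; apply/conj_Creal/ger0_real.
have ck := cr (dl R k); have cl := cr (dl R l); rewrite Bf_dl in ck; rewrite Bf_dl in cl.
have e1 := cr (fun i => dl R k i + 1 * dl R l i).
have e2 := cr (fun i => dl R k i + 'i * dl R l i).
rewrite Bf_add !Bf_dl rmorph1 !mul1r in e1.
rewrite !rmorphD /= ck cl in e1.
rewrite Bf_add !Bf_dl conjCi in e2.
rewrite !rmorphD !rmorphM /= conjCi ?rmorphN /= ?conjCK ck cl in e2.
rewrite conjCi opprK !mulNr !mulrN in e2.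
move: e1 e2; move: (Q k l) (Q l k) => a b e1 e2.
have e1' : a^* + b^* = a + b.
  by apply: (addrI (Q k k)); apply: (addIr (Q l l)); rewrite !addrA.
have e2' : 'i * (b^* - a^*) = 'i * (a - b).
  have h : - ('i * a^*) + 'i * b^* = 'i * a + - ('i * b).
    by apply: (addrI (Q k k)); apply: (addIr (- ('i * 'i * Q l l))); rewrite !addrA e2 mulNr.
  transitivity (- ('i * a^*) + 'i * b^*). ring. rewrite h; ring.
have hi : 'i != 0 :> R by rewrite neq0Ci.
have e3 := mulfI hi e2'.
have h2 : (2%:R : R) != 0 by rewrite pnatr_eq0.
apply: (mulfI h2).
have -> : 2%:R * b = (a + b) + (b - a) by ring.
have -> : 2%:R * a^* = (a^* + b^*) + (a^* - b^*) by ring.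
by rewrite e1' (_ : a^* - b^* = b - a) // -opprB e3 opprB.
Qed.



Lemma row_zero (R : numClosedFieldType) (n : nat) (Q : 'M[R]_n) m :
  psdf Q -> Q m m = 0 -> forall l, Q m l = 0.
Proof.
move=> HQ qz l; apply/eqP; apply: contraT => hs.
set s := Q m l in hs.
have herm := psdf_herm HQ.
have p0 : 0 < s * s^* by rewrite mul_conjC_gt0.
have ll0 : 0 <= Q l l by have := HQ (dl R l); rewrite Bf_dl.
set c := (Q l l + 1) / (s * s^*).
have c0 : 0 <= c by rewrite divr_ge0 // ?addr_ge0 // ltW.
have cc : c^* = c by apply/conj_Creal/ger0_real.
have := HQ (fun i => dl R l i + (- (c * s)) * dl R m i).
rewrite Bf_add !Bf_dl qz (herm m l) -/s rmorphN rmorphM /= cc.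
have -> : Q l l + - (c * s) * s^* + - (c * s^*) * s + - (c * s) * - (c * s^*) * 0
   = Q l l - 2%:R * (c * (s * s^*)) by ring.
rewrite /c divfK ?lt0r_neq0 //.
have -> : Q l l - 2%:R * (Q l l + 1) = - (Q l l + 2%:R) by ring.
rewrite oppr_ge0 => h.
have : 0 < Q l l + 2%:R by rewrite ltr_wpDl.
by move=> /lt_le_trans /(_ h); rewrite ltxx.
Qed.

Lemma frob_aux (R : numClosedFieldType) (n : nat) (N : 'M[R]_n) : psdf N ->
  forall r (T : {set 'I_n}) (Q : 'M[R]_n), #|T| = r ->
  (forall k l, Q k l != 0 -> (k \in T) && (l \in T)) -> psdf Q ->
  0 <= \sum_k \sum_l N k l * Q k l.
Proof.
move=> HN; elim=> [|r IH] T Q hT hS HQ.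
  have T0 : T = set0 by apply/eqP; rewrite -cards_eq0 hT.
  rewrite big1 // => k _; rewrite big1 // => l _.
  have -> : Q k l = 0 by apply/eqP; apply: contraT => /hS; rewrite T0 inE.
  by rewrite mulr0.
have [m hm] : exists m, m \in T by apply/card_gt0P; rewrite hT.
have hT' : #|T :\ m| = r by move: hT; rewrite (cardsD1 m) hm add1n => -[].
have herm := psdf_herm HQ.
have hz : forall k l, (k \notin T) || (l \notin T) -> Q k l = 0.
  move=> k l h; apply/eqP; apply: contraT => /hS /andP [hk hl].
  by move: h; rewrite hk hl.
have q0 : 0 <= Q m m by have := HQ (dl R m); rewrite Bf_dl.
have [qz|qnz] := eqVneq (Q m m) 0.
  have rz := row_zero HQ qz.
  apply: (IH (T :\ m) Q hT' _ HQ) => k l h.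
  have /andP [hk hl] := hS _ _ h.
  rewrite !inE hk hl !andbT; apply/andP; split.
    by apply/negP => /eqP ekm; rewrite ekm rz eqxx in h.
  by apply/negP => /eqP elm; rewrite elm herm rz rmorph0 eqxx in h.
set q := Q m m in q0 qnz.
pose Q' := \matrix_(k, l) (Q k l - Q k m * Q m l / q).
have -> : \sum_k \sum_l N k l * Q k l = \sum_k \sum_l N k l * Q' k l
     + q^-1 * Bf N (fun k => Q m k) (fun k => Q m k).
  rewrite /Bf mulr_sumr -big_split; apply: eq_bigr => k _.
  rewrite mulr_sumr -big_split; apply: eq_bigr => l _ /=.
  rewrite mxE -herm; field; exact: qnz.
apply: addr_ge0; last by apply: mulr_ge0; [rewrite invr_ge0 | exact: HN].
apply: (IH (T :\ m) Q' hT').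
  move=> k l; rewrite mxE => h.
  rewrite !inE; apply/andP; split; apply/andP; split.
  - by apply/negP => /eqP ekm; move: h; rewrite ekm -/q mulrAC divff // mul1r subrr eqxx.
  - apply: contraT => hk; move: h.
    by rewrite (hz k l) ?hk // (hz k m) ?hk // !mul0r subrr eqxx.
  - by apply/negP => /eqP elm; move: h; rewrite elm -/q -mulrA divff // mulr1 subrr eqxx.
  - apply: contraT => hl; move: h.
    by rewrite (hz k l) ?hl ?orbT // (hz m l) ?hl ?orbT // mulr0 !mul0r subrr eqxx.
move=> v.
set s2 := \sum_j Q m j * v j.
set s1 := \sum_i (v i)^* * Q i m.
have qc : q^* = q by apply/conj_Creal/ger0_real.
have E : Bf Q' v v = Bf Q v v - s1 * s2 / q.
  rewrite /Bf /s1 -mulrA mulr_suml -sumrB; apply: eq_bigr => i _.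
  rewrite /s2 mulr_suml mulr_sumr -sumrB; apply: eq_bigr => j _.
  rewrite mxE; field; exact: qnz.
have qic : (q^-1)^* = q^-1 by apply/conj_Creal/ger0_real; rewrite invr_ge0.
have := HQ (fun i => v i + (- (s2 * q^-1)) * dl R m i).
rewrite Bf_add Bf_dl_l Bf_dl_r Bf_dl -/s1 -/s2 -/q rmorphN rmorphM /= qic E.
have -> : Bf Q v v + - (s2 * q^-1) * s1 + - (s2^* * q^-1) * s2
   + - (s2 * q^-1) * - (s2^* * q^-1) * q
  = Bf Q v v - s1 * s2 / q by field; exact: qnz.
by [].
Qed.

Lemma frob_ge0 (R : numClosedFieldType) (n : nat) (N Q : 'M[R]_n) :
  psdf N -> psdf Q -> 0 <= \sum_k \sum_l N k l * Q k l.
Proof.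
move=> HN HQ; apply: (frob_aux HN (erefl #|[set: 'I_n]|) _ HQ) => k l _.
by rewrite !inE.
Qed.

Lemma ex4 (R : numClosedFieldType) (m n : nat) (F : 'I_m -> 'I_m -> 'I_n -> 'I_n -> R) :
  \sum_i \sum_j \sum_k \sum_l F i j k l = \sum_k \sum_l \sum_i \sum_j F i j k l.
Proof.
under eq_bigr do rewrite exchange_big.
rewrite exchange_big; apply: eq_bigr => k _.
under eq_bigr do rewrite exchange_big.
by rewrite exchange_big.
Qed.

Definition Nm (R : numClosedFieldType) (dA dB : nat) (psi : 'M[R]_(dA, dB)) (P : 'M[R]_dA)
  : 'M[R]_dB := \matrix_(k, l) \sum_i \sum_j (psi i k)^* * P i j * psi j l.

Lemma qcorr_Q (R : numClosedFieldType) (dA dB : nat) (psi : 'M[R]_(dA, dB)) P Q :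
  qcorr psi P Q = \sum_k \sum_l Nm psi P k l * Q k l.
Proof.
rewrite /qcorr ex4; apply: eq_bigr => k _; apply: eq_bigr => l _.
rewrite mxE mulr_suml; apply: eq_bigr => i _; rewrite mulr_suml; apply: eq_bigr => j _.
ring.
Qed.

Lemma qcorr_P (R : numClosedFieldType) (dA dB : nat) (psi : 'M[R]_(dA, dB)) P Q :
  qcorr psi P Q = \sum_i \sum_j P i j * (\sum_k \sum_l (psi i k)^* * Q k l * psi j l).
Proof.
rewrite /qcorr; apply: eq_bigr => i _; apply: eq_bigr => j _.
rewrite mulr_sumr; apply: eq_bigr => k _; rewrite mulr_sumr; apply: eq_bigr => l _.
ring.
Qed.

Lemma Nm_psdf (R : numClosedFieldType) (dA dB : nat) (psi : 'M[R]_(dA, dB)) P :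
  psdf P -> psdf (Nm psi P).
Proof.
move=> HP v; have := HP (fun i => \sum_k psi i k * v k).
suff -> : Bf (Nm psi P) v v = Bf P (fun i => \sum_k psi i k * v k)
   (fun i => \sum_k psi i k * v k) by [].
rewrite /Bf.
transitivity (\sum_i \sum_j \sum_k \sum_l
   (v k)^* * (psi i k)^* * P i j * psi j l * v l); last first.
  apply: eq_bigr => i _; apply: eq_bigr => j _.
  rewrite rmorph_sum mulr_suml mulr_suml; apply: eq_bigr => k _.
  rewrite mulr_sumr; apply: eq_bigr => l _; rewrite rmorphM /=; ring.
rewrite ex4; apply: eq_bigr => k _; apply: eq_bigr => l _.
rewrite mxE mulr_sumr mulr_suml; apply: eq_bigr => i _.
rewrite mulr_sumr mulr_suml; apply: eq_bigr => j _; ring.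
Qed.

Lemma qcorr_ge0 (R : numClosedFieldType) (dA dB : nat) (psi : 'M[R]_(dA, dB)) P Q :
  psd P -> psd Q -> 0 <= qcorr psi P Q.
Proof.
move=> HP HQ; rewrite qcorr_Q; apply: frob_ge0.
  exact/Nm_psdf/psd_psdf.
exact: psd_psdf.
Qed.

Lemma qcorr_sumP (R : numClosedFieldType) (S : finType) (dA dB : nat)
  (psi : 'M[R]_(dA, dB)) (F : S -> 'M[R]_dA) Q :
  \sum_a qcorr psi (F a) Q = qcorr psi (\sum_a F a) Q.
Proof.
rewrite qcorr_P; under eq_bigr do rewrite qcorr_P.
rewrite exchange_big; apply: eq_bigr => i _.
rewrite exchange_big; apply: eq_bigr => j _.
by rewrite summxE mulr_suml.
Qed.

Lemma qcorr_sumQ (R : numClosedFieldType) (S : finType) (dA dB : nat)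
  (psi : 'M[R]_(dA, dB)) P (F : S -> 'M[R]_dB) :
  \sum_a qcorr psi P (F a) = qcorr psi P (\sum_a F a).
Proof.
rewrite qcorr_Q; under eq_bigr do rewrite qcorr_Q.
rewrite exchange_big; apply: eq_bigr => i _.
rewrite exchange_big; apply: eq_bigr => j _.
by rewrite summxE mulr_sumr.
Qed.

Lemma sum_eq_r (R : numClosedFieldType) (n : nat) (i : 'I_n) (F : 'I_n -> R) :
  \sum_j (i == j)%:R * F j = F i.
Proof.
rewrite (bigD1 i) //= eqxx mul1r big1 ?addr0 // => j hj.
by rewrite eq_sym (negbTE hj) mul0r.
Qed.

Lemma qcorr11 (R : numClosedFieldType) (dA dB : nat) (psi : 'M[R]_(dA, dB)) :
  is_state psi -> qcorr psi 1%:M 1%:M = 1.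
Proof.
move=> Hs; rewrite qcorr_P -{3}Hs; apply: eq_bigr => i _.
under eq_bigr do rewrite mxE.
rewrite sum_eq_r; apply: eq_bigr => k _.
under eq_bigr do rewrite mxE mulrAC.
under eq_bigr do rewrite [_ * (_ %:R)]mulrC.
by rewrite sum_eq_r normCK mulrC.
Qed.

Lemma sum_delta (R : numClosedFieldType) (S : finType) (c : S) (F : S -> R) :
  \sum_a F a * (c == a)%:R = F c.
Proof.
rewrite (bigD1 c) //= eqxx mulr1 big1 ?addr0 // => j hj.
by rewrite eq_sym (negbTE hj) mulr0.
Qed.

Lemma sum_bool_split (R : numClosedFieldType) (X : bool) (F : bool -> R) :
  \sum_(x : bool) F x = F X + F (~~ X).
Proof. by case: X; rewrite big_bool //= addrC. Qed.

Lemma cval_ge0 (R : numClosedFieldType) (SA SB : finType)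
  (pi : bool -> bool -> R) (V : SA -> SB -> bool -> bool -> bool) alpha beta :
  is_distribution pi -> 0 <= cval pi V alpha beta.
Proof.
move=> [p0 _]; apply: sumr_ge0 => x _; apply: sumr_ge0 => y _.
by apply: mulr_ge0 => //; rewrite ler0n.
Qed.

Lemma omega_props (R : numClosedFieldType) (SA SB : finType)
  (pi : bool -> bool -> R) (V : SA -> SB -> bool -> bool -> bool) :
  is_distribution pi ->
  [/\ 0 <= omega pi V, (forall alpha beta, cval pi V alpha beta <= omega pi V) &
      (omega pi V = 0 \/ exists alpha beta, omega pi V = cval pi V alpha beta)].
Proof.
move=> Hd.
have inner : forall alpha, [/\ 0 <= \big[Num.max/0]_(beta : {ffun bool -> SB}) cval pi V alpha beta,
   (forall beta, beta \in index_enum _ -> cval pi V alpha beta <= \big[Num.max/0]_(beta : {ffun bool -> SB}) cval pi V alpha beta) &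
   (\big[Num.max/0]_(beta : {ffun bool -> SB}) cval pi V alpha beta = 0 \/ exists beta,
      \big[Num.max/0]_(beta : {ffun bool -> SB}) cval pi V alpha beta = cval pi V alpha beta)].
  move=> alpha; exact: (bigmax_props (index_enum {ffun bool -> SB}) (fun beta => @cval_ge0 _ _ _ pi V alpha beta Hd)).
have i0 : forall alpha, 0 <= \big[Num.max/0]_(beta : {ffun bool -> SB}) cval pi V alpha beta.
  by move=> alpha; case: (inner alpha).
have [o0 o2 o3] := bigmax_props (index_enum {ffun bool -> SA}) i0.
rewrite /omega; split => //.
  move=> alpha beta; have [_ i2 _] := inner alpha.
  apply: le_trans (i2 beta (mem_index_enum _)) _; exact: o2 (mem_index_enum _).
case: o3 => [->|[alpha ->]]; first by left.
have [_ _ [->|[beta ->]]] := inner alpha; first by left.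
by right; exists alpha, beta.
Qed.

Lemma det_qv (R : numClosedFieldType) (SA SB : finType)
  (pi : bool -> bool -> R) (V : SA -> SB -> bool -> bool -> bool) alpha beta :
  quantum_values pi V (cval pi V alpha beta).
Proof.
exists 1%N, 1%N, (const_mx 1), (fun x a => ((alpha x == a)%:R)%:M),
  (fun y b => ((beta y == b)%:R)%:M).
have povm : forall (S : finType) (g : {ffun bool -> S}),
    is_povm (fun x a => (((g x == a)%:R : R))%:M : 'M[R]_1).
  move=> S g; split.
    move=> x a v; rewrite /psd !big_ord1 mxE eqxx mulr1n mulrAC.
    apply: mulr_ge0; last by rewrite ler0n.
    by rewrite mulrC mul_conjC_ge0.
  move=> x; apply/matrixP => i j; rewrite summxE mxE.
  under eq_bigr do rewrite mxE.
  rewrite sumrMnl; congr (_ *+ _).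
  transitivity (\sum_a (1:R) * (g x == a)%:R); first by apply: eq_bigr => a _; rewrite mul1r.
  exact: (sum_delta (g x) (fun=> (1:R))).
split.
- by rewrite /is_state !big_ord1 mxE normr1 expr1n.
- exact: povm.
- exact: povm.
rewrite /cval /qval; apply: eq_bigr => x _; apply: eq_bigr => y _; congr (_ * _).
under eq_bigr do under eq_bigr do rewrite /qcorr !big_ord1 !mxE eqxx !mulr1n rmorph1 mul1r mulr1.
under eq_bigr do under eq_bigr do rewrite mulrA.
rewrite -(sum_delta (alpha x) (fun a => (V a (beta y) x y)%:R)).
apply: eq_bigr => a _.
under eq_bigr do rewrite mulrAC.
by rewrite -mulr_suml (sum_delta (beta y) (fun b => (V a b x y)%:R)).
Qed.

Lemma natle (R : numClosedFieldType) (c d : bool) : (c -> d) -> ((c%:R : R) <= d%:R).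
Proof. case: c; case: d => //= H; try by rewrite lexx. by have := H isT. Qed.

Lemma neg_eqF (X : bool) : (~~ X == X) = false.
Proof. by case: X. Qed.

Lemma qval_le (R : numClosedFieldType) (SA SB : finType)
  (pi : bool -> bool -> R) (V : SA -> SB -> bool -> bool -> bool)
  (dA dB : nat) (psi : 'M[R]_(dA, dB)) PA PB (X Y : bool) (a0 : SA) (b0 : SB) :
  is_distribution pi -> pi X Y = 0 -> is_state psi -> is_povm PA -> is_povm PB ->
  qval pi V psi PA PB <= omega pi V.
Proof.
move=> Hd pXY Hs [HA1 HA2] [HB1 HB2].
have [p0 _] := Hd.
have [_ ocv _] := omega_props V Hd.
pose q x y a b := qcorr psi (PA x a) (PB y b).
have q0 : forall x y a b, 0 <= q x y a b by move=> x y a b; apply: qcorr_ge0.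
have mA : forall x x' y b, \sum_a q x y a b = \sum_a q x' y a b.
  by move=> x x' y b; rewrite /q !qcorr_sumP !HA2.
have mB : forall x y y' a, \sum_b q x y a b = \sum_b q x y' a b.
  by move=> x y y' a; rewrite /q !qcorr_sumQ !HB2.
have tot : forall x y, \sum_a \sum_b q x y a b = 1.
  move=> x y; rewrite /q; under eq_bigr do rewrite qcorr_sumQ HB2.
  by rewrite qcorr_sumP HA2 qcorr11.
pose f b := odflt a0 [pick a | V a b X (~~ Y)].
have hf : forall a b, V a b X (~~ Y) -> V (f b) b X (~~ Y).
  move=> a b h; rewrite /f; case: pickP => [a' -> //|/(_ a)]; by rewrite h.
pose h a := odflt b0 [pick b | V a b (~~ X) Y].
have hh : forall a b, V a b (~~ X) Y -> V a (h a) (~~ X) Y.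
  move=> a b hv; rewrite /h; case: pickP => [b' -> //|/(_ b)]; by rewrite hv.
pose c a b := pi (~~ X) (~~ Y) * (V a b (~~ X) (~~ Y))%:R
   + pi X (~~ Y) * (V (f b) b X (~~ Y))%:R + pi (~~ X) Y * (V a (h a) (~~ X) Y)%:R.
have cb : forall a b, c a b <= omega pi V.
  move=> a b.
  have := ocv [ffun x => if x == X then f b else a] [ffun y => if y == Y then h a else b].
  suff -> : cval pi V [ffun x => if x == X then f b else a]
     [ffun y => if y == Y then h a else b] = c a b by [].
  rewrite /cval (sum_bool_split X) !(sum_bool_split Y) !ffunE !eqxx !neg_eqF pXY mul0r add0r.
  rewrite /c; ring.
rewrite /qval (sum_bool_split X) !(sum_bool_split Y) pXY mul0r add0r.
set Q0 := fun a b => q (~~ X) (~~ Y) a b.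
have SA_ : \sum_a \sum_b (V a b X (~~ Y))%:R * qcorr psi (PA X a) (PB (~~ Y) b)
    <= \sum_a \sum_b Q0 a b * (V (f b) b X (~~ Y))%:R.
  apply: (@le_trans _ _ (\sum_a \sum_b (V (f b) b X (~~ Y))%:R * q X (~~ Y) a b)).
    apply: ler_sum => a _; apply: ler_sum => b _; apply: ler_wpM2r; first exact: q0.
    by apply: natle; apply: hf.
  rewrite exchange_big [leRHS]exchange_big /=; apply: ler_sum => b _.
  rewrite -mulr_sumr (mA X (~~ X)) mulr_sumr; apply: ler_sum => a _.
  by rewrite mulrC.
have SB_ : \sum_a \sum_b (V a b (~~ X) Y)%:R * qcorr psi (PA (~~ X) a) (PB Y b)
    <= \sum_a \sum_b Q0 a b * (V a (h a) (~~ X) Y)%:R.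
  apply: (@le_trans _ _ (\sum_a \sum_b (V a (h a) (~~ X) Y)%:R * q (~~ X) Y a b)).
    apply: ler_sum => a _; apply: ler_sum => b _; apply: ler_wpM2r; first exact: q0.
    by apply: natle; apply: hh.
  apply: ler_sum => a _.
  rewrite -mulr_sumr (mB (~~ X) Y (~~ Y)) mulr_sumr; apply: ler_sum => b _.
  by rewrite mulrC.
have SC_ : \sum_a \sum_b (V a b (~~ X) (~~ Y))%:R * qcorr psi (PA (~~ X) a) (PB (~~ Y) b)
    = \sum_a \sum_b Q0 a b * (V a b (~~ X) (~~ Y))%:R.
  by apply: eq_bigr => a _; apply: eq_bigr => b _; rewrite mulrC.
have E : \sum_a \sum_b Q0 a b * c a b =
   pi X (~~ Y) * (\sum_a \sum_b Q0 a b * (V (f b) b X (~~ Y))%:R)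
   + (pi (~~ X) Y * (\sum_a \sum_b Q0 a b * (V a (h a) (~~ X) Y)%:R)
   + pi (~~ X) (~~ Y) * (\sum_a \sum_b Q0 a b * (V a b (~~ X) (~~ Y))%:R)).
  rewrite !mulr_sumr -!big_split; apply: eq_bigr => a _.
  rewrite !mulr_sumr -!big_split; apply: eq_bigr => b _ /=.
  rewrite /c; ring.
apply: (@le_trans _ _ (\sum_a \sum_b Q0 a b * c a b)).
  rewrite E SC_; apply: lerD; first exact: ler_wpM2l.
  by apply: lerD => //; apply: ler_wpM2l.
apply: (@le_trans _ _ (\sum_a \sum_b Q0 a b * omega pi V)).
  apply: ler_sum => a _; apply: ler_sum => b _; apply: ler_wpM2l; first exact: q0.
  exact: cb.
under eq_bigr do rewrite -mulr_suml.
by rewrite -mulr_suml tot mul1r.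
Qed.

Unset Implicit Arguments.

Theorem mainTheorem8 (R : numClosedFieldType) (SA SB : finType)
  (pi : bool -> bool -> R) (V : SA -> SB -> bool -> bool -> bool) :
  (0 < #|SA|)%N -> (0 < #|SB|)%N ->
  is_distribution pi ->
  (exists X Y : bool, pi X Y = 0) ->
  omega_star_eq_omega pi V.
Proof.
move=> /card_gt0P [a0 _] /card_gt0P [b0 _] Hd [X [Y pXY]].
split.
  move=> v [dA [dB [psi [PA [PB [Hs HA HB ->]]]]]].
  exact: (@qval_le _ _ _ pi V _ _ psi PA PB X Y a0 b0 Hd pXY Hs HA HB).
move=> u Hu.
have [_ _ oex] := omega_props V Hd.
case: oex => [->|[alpha [beta ->]]]; last exact: Hu (det_qv _ _ _ _).
pose al : {ffun bool -> SA} := [ffun => a0].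
pose be : {ffun bool -> SB} := [ffun => b0].
apply: (le_trans (@cval_ge0 _ _ _ pi V al be Hd)).
exact: Hu (det_qv _ _ _ _).
Qed.
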